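(* Let $1<p<\infty$ and let $T:\ell_p\to\ell_p$ be the bounded linear operator defined by $Te_1=e_1$ and $Te_n=(1-\frac1n)e_n$ for all $n\ge2$, where $\{e_n\}$ is the standard unit vector basis of (real) $\ell_p$. Then $\|T\|=1$, $M_T=\{\pm e_1\}$, and $T$ is not a smooth point of $\mathbb{B}(\ell_p)$.
   Context: $\mathbb{B}(\ell_p)$ has the operator norm; $M_T=\{x\in\ell_p:\|x\|=1,\ \|Tx\|=\|T\|\}$. A nonzero element $x$ of a normed space $\mathbb{Z}$ is smooth if there is a unique $f\in\mathbb{Z}^*$ with $\|f\|=1$ and $f(x)=\|x\|$. *)

(* Defs.v *)
From Stdlib Require Import Reals Lra Classical ClassicalEpsilon Arith.
Open Scope R_scope.

Definition Seq := nat -> R.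
Definition Op := Seq -> Seq.

(* a^q for a >= 0, with 0^q := 0 (q > 0 in all uses) *)
Definition rpow (a q : R) : R := if Rlt_dec 0 a then Rpower a q else 0.

(* the sum of a convergent series (meaningful when it converges) *)
Definition series_sum (u : nat -> R) : R :=
  epsilon (inhabits 0) (fun l => infinite_sum u l).

(* least upper bound of a set of reals (meaningful when it exists) *)
Definition sup (E : R -> Prop) : R :=
  epsilon (inhabits 0) (fun M => is_lub E M).

Definition in_lp (p : R) (x : Seq) : Prop :=
  exists l, infinite_sum (fun n => rpow (Rabs (x n)) p) l.

Definition lp_norm (p : R) (x : Seq) : R :=
  rpow (series_sum (fun n => rpow (Rabs (x n)) p)) (1 / p).

(* bounded linear operator on ℓ_p (only its action on ℓ_p matters) *)
Definition is_bounded_op (p : R) (A : Op) : Prop :=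
  (forall x, in_lp p x -> in_lp p (A x)) /\
  (forall x y a b, in_lp p x -> in_lp p y ->
     forall n, A (fun k => a * x k + b * y k) n = a * A x n + b * A y n) /\
  (exists C, forall x, in_lp p x -> lp_norm p (A x) <= C * lp_norm p x).

Definition op_norm (p : R) (A : Op) : R :=
  sup (fun r => exists x, in_lp p x /\ lp_norm p x = 1 /\ r = lp_norm p (A x)).

Definition M_set (p : R) (A : Op) (x : Seq) : Prop :=
  in_lp p x /\ lp_norm p x = 1 /\ lp_norm p (A x) = op_norm p A.

Definition op_lin (a : R) (A : Op) (b : R) (B : Op) : Op :=
  fun x n => a * A x n + b * B x n.

Definition is_bounded_functional (p : R) (f : Op -> R) : Prop :=
  (forall A B a b, is_bounded_op p A -> is_bounded_op p B ->
     f (op_lin a A b B) = a * f A + b * f B) /\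
  (exists C, forall A, is_bounded_op p A -> Rabs (f A) <= C * op_norm p A).

Definition dual_norm (p : R) (f : Op -> R) : R :=
  sup (fun r => exists A, is_bounded_op p A /\ op_norm p A <= 1 /\ r = Rabs (f A)).

Definition norming_functional (p : R) (A : Op) (f : Op -> R) : Prop :=
  is_bounded_functional p f /\ dual_norm p f = 1 /\ f A = op_norm p A.

(* A is smooth in B(ℓ_p): exactly one norming functional
   (functionals identified when they agree on B(ℓ_p)) *)
Definition smooth_point (p : R) (A : Op) : Prop :=
  exists f, norming_functional p A f /\
    forall g, norming_functional p A g ->
      forall B, is_bounded_op p B -> g B = f B.

(* e_1 is index 0; e_n is index n-1 *)
Definition e1 : Seq := fun n => if Nat.eqb n 0 then 1 else 0.

Definition T_op : Op :=
  fun x n => if Nat.eqb n 0 then x n else (1 - 1 / INR (S n)) * x n.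

(* Main.v *)
Require Import Defs.
From Stdlib Require Import Reals Lra Lia ZArith Classical ClassicalEpsilon Arith FunctionalExtensionality.
Open Scope R_scope.

Lemma nat_big (A : R) : exists N : nat, A < INR N.
Proof.
  destruct (archimed A) as [H _].
  destruct (Z_le_gt_dec (up A) 0) as [Hz|Hz].
  - exists 0%nat. simpl. apply IZR_le in Hz. lra.
  - exists (Z.to_nat (up A)). rewrite INR_IZR_INZ, Z2Nat.id by lia. exact H.
Qed.

Lemma rpow_pos_eq a q : 0 < a -> rpow a q = Rpower a q.
Proof. intros H; unfold rpow; destruct (Rlt_dec 0 a); [reflexivity|lra]. Qed.
Lemma rpow_zero q : rpow 0 q = 0.
Proof. unfold rpow; destruct (Rlt_dec 0 0); [lra|reflexivity]. Qed.
Lemma rpow_nonneg a q : 0 <= rpow a q.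
Proof. unfold rpow; destruct (Rlt_dec 0 a); [unfold Rpower; left; apply exp_pos|lra]. Qed.
Lemma rpow_gt0 a q : 0 < a -> 0 < rpow a q.
Proof. intros H; rewrite rpow_pos_eq by exact H; apply exp_pos. Qed.
Lemma rpow_lt a b q : 0 <= a -> a < b -> 0 < q -> rpow a q < rpow b q.
Proof.
  intros Ha Hab Hq. destruct Ha as [Ha|Ha].
  - rewrite !rpow_pos_eq by lra. unfold Rpower. apply exp_increasing.
    apply Rmult_lt_compat_l; [exact Hq|]. apply ln_increasing; lra.
  - subst. rewrite rpow_zero. apply rpow_gt0; lra.
Qed.
Lemma rpow_le a b q : 0 <= a -> a <= b -> 0 < q -> rpow a q <= rpow b q.
Proof. intros Ha [H|H] Hq; [left; apply rpow_lt; auto| subst; lra]. Qed.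
Lemma rpow_rpow a q r : 0 <= a -> rpow (rpow a q) r = rpow a (q*r).
Proof.
  intros [Ha|Ha].
  - rewrite (rpow_pos_eq a q) by exact Ha. rewrite rpow_pos_eq by (apply exp_pos).
    rewrite rpow_pos_eq by exact Ha. apply Rpower_mult.
  - subst. rewrite !rpow_zero. reflexivity.
Qed.
Lemma rpow_one_exp a : 0 <= a -> rpow a 1 = a.
Proof.
  intros [Ha|Ha]; [rewrite rpow_pos_eq by exact Ha; apply Rpower_1; exact Ha| subst; apply rpow_zero].
Qed.
Lemma rpow_one_base q : rpow 1 q = 1.
Proof. rewrite rpow_pos_eq by lra. unfold Rpower. rewrite ln_1, Rmult_0_r. apply exp_0. Qed.
Lemma rpow_inv_id a p : 0 < p -> 0 <= a -> rpow (rpow a p) (1/p) = a.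
Proof.
  intros Hp Ha. rewrite rpow_rpow by exact Ha.
  replace (p*(1/p)) with 1 by (field; lra). apply rpow_one_exp; exact Ha.
Qed.
Lemma rpow_inv_id' a p : 0 < p -> 0 <= a -> rpow (rpow a (1/p)) p = a.
Proof.
  intros Hp Ha. rewrite rpow_rpow by exact Ha.
  replace ((1/p)*p) with 1 by (field; lra). apply rpow_one_exp; exact Ha.
Qed.

Lemma series_sum_eq u l : infinite_sum u l -> series_sum u = l.
Proof.
  intros H. unfold series_sum.
  assert (E : exists l, infinite_sum u l) by (exists l; exact H).
  pose proof (epsilon_spec (inhabits 0) (fun l => infinite_sum u l) E) as H2.
  eapply uniqueness_sum; [exact H2|exact H].
Qed.
Lemma sum_le_lim u l : (forall n, 0 <= u n) -> infinite_sum u l -> forall N, sum_f_R0 u N <= l.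
Proof. intros H1 H2 N. apply sum_incr; auto. Qed.
Lemma term_le_sum u N : (forall n, 0 <= u n) -> u N <= sum_f_R0 u N.
Proof.
  intros H. destruct N; simpl; [lra|].
  pose proof (cond_pos_sum u N H). lra.
Qed.
Lemma lim_nonneg u l : (forall n, 0 <= u n) -> infinite_sum u l -> 0 <= l.
Proof.
  intros H1 H2. eapply Rle_trans; [apply (cond_pos_sum u 0 H1)|]. apply sum_le_lim; auto.
Qed.
Lemma sum_comp u v l : (forall n, 0 <= u n <= v n) -> infinite_sum v l ->
  exists l', infinite_sum u l' /\ l' <= l.
Proof.
  intros H Hv. destruct (Rseries_CV_comp u v H (exist _ l Hv)) as [l' Hl'].
  exists l'. split; [exact Hl'|]. eapply Rle_cv_lim; [|exact Hl'|exact Hv].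
  intros n. apply sum_Rle. intros; apply H.
Qed.
Lemma infinite_sum_minus u v a b : infinite_sum u a -> infinite_sum v b ->
  infinite_sum (fun n => u n - v n) (a - b).
Proof.
  intros Hu Hv eps Heps.
  destruct (CV_minus (fun n => sum_f_R0 u n) (fun n => sum_f_R0 v n) a b Hu Hv eps Heps) as [N HN].
  exists N. intros n Hn. rewrite minus_sum. apply HN; auto.
Qed.
Lemma sum_single (k : nat) (c : R) (u : nat -> R) :
  (forall n, n <> k -> u n = 0) -> u k = c -> infinite_sum u c.
Proof.
  intros H0 Hk.
  assert (HS : forall n, sum_f_R0 u n = if Nat.leb k n then c else 0).
  { induction n as [|n IH].
    - simpl. destruct k; simpl; [exact Hk| apply H0; lia].
    - simpl. rewrite IH.
      destruct (Nat.leb_spec k n) as [Hl|Hl]; destruct (Nat.leb_spec k (S n)) as [Hl2|Hl2];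
        try lia.
      + rewrite (H0 (S n)) by lia. ring.
      + assert (Hkn : S n = k) by lia. rewrite Hkn, Hk. ring.
      + rewrite (H0 (S n)) by lia. ring. }
  intros eps Heps. exists k. intros n Hn. rewrite HS.
  destruct (Nat.leb_spec k n); [|lia]. unfold Rdist. rewrite Rminus_diag, Rabs_R0. lra.
Qed.

Lemma lp_norm_eq p x S : infinite_sum (fun n => rpow (Rabs (x n)) p) S -> lp_norm p x = rpow S (1/p).
Proof. intros H. unfold lp_norm. rewrite (series_sum_eq _ _ H). reflexivity. Qed.

Lemma coord_le p x k : 0 < p -> in_lp p x -> Rabs (x k) <= lp_norm p x.
Proof.
  intros Hp [S HS]. rewrite (lp_norm_eq _ _ _ HS).
  rewrite <- (rpow_inv_id (Rabs (x k)) p Hp (Rabs_pos _)).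
  apply rpow_le; [apply rpow_nonneg| |apply Rdiv_lt_0_compat; lra].
  eapply Rle_trans; [apply (term_le_sum (fun n => rpow (Rabs (x n)) p) k)|apply sum_le_lim];
    auto using rpow_nonneg.
Qed.

Lemma lp_mono p x y : 0 < p -> in_lp p x -> (forall n, Rabs (y n) <= Rabs (x n)) ->
  in_lp p y /\ lp_norm p y <= lp_norm p x.
Proof.
  intros Hp [S HS] H.
  destruct (sum_comp (fun n => rpow (Rabs (y n)) p) (fun n => rpow (Rabs (x n)) p) S) as [S' [HS' Hle]].
  - intros n; split; [apply rpow_nonneg|apply rpow_le; auto using Rabs_pos].
  - exact HS.
  - split; [exists S'; exact HS'|]. rewrite (lp_norm_eq _ _ _ HS), (lp_norm_eq _ _ _ HS').
    apply rpow_le; auto; [|apply Rdiv_lt_0_compat; lra].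
    eapply lim_nonneg; [|exact HS']. intros; apply rpow_nonneg.
Qed.

Lemma sup_eq E M : is_lub E M -> sup E = M.
Proof.
  intros H. unfold sup.
  pose proof (epsilon_spec (inhabits 0) (fun M => is_lub E M) (ex_intro _ M H)) as H2.
  simpl in H2. destruct H as [H1 H3], H2 as [H4 H5]. apply Rle_antisym; auto.
Qed.
Lemma sup_ub E r C : (forall s, E s -> s <= C) -> E r -> r <= sup E.
Proof.
  intros HC Hr. destruct (completeness E (ex_intro _ C HC) (ex_intro _ r Hr)) as [m Hm].
  rewrite (sup_eq E m Hm). apply Hm; exact Hr.
Qed.

Definition en (k : nat) : Seq := fun n => if Nat.eqb n k then 1 else 0.
Lemma en_sum p k : infinite_sum (fun n => rpow (Rabs (en k n)) p) 1.
Proof.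
  apply sum_single with k.
  - intros n Hn. unfold en. destruct (Nat.eqb_spec n k); [contradiction|].
    rewrite Rabs_R0; apply rpow_zero.
  - unfold en. rewrite Nat.eqb_refl, Rabs_R1. apply rpow_one_base.
Qed.
Lemma en_lp p k : in_lp p (en k) /\ lp_norm p (en k) = 1.
Proof.
  split; [exists 1; apply en_sum|].
  rewrite (lp_norm_eq _ _ _ (en_sum p k)); apply rpow_one_base.
Qed.

Lemma op_apply_le p A x : is_bounded_op p A -> in_lp p x -> lp_norm p x = 1 ->
  lp_norm p (A x) <= op_norm p A.
Proof.
  intros [_ [_ [C HC]]] Hx Hn. unfold op_norm. apply sup_ub with C.
  - intros s [y [Hy [Hny ->]]]. specialize (HC y Hy). rewrite Hny in HC. lra.
  - exists x; auto.
Qed.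
Lemma coord_op_le p A k m : 0 < p -> is_bounded_op p A -> Rabs (A (en k) m) <= op_norm p A.
Proof.
  intros Hp HA. destruct (en_lp p k) as [H1 H2].
  eapply Rle_trans; [apply coord_le; [exact Hp| apply (proj1 HA); exact H1]|].
  apply op_apply_le; auto.
Qed.

Lemma coef_bounds n : 0 <= 1 - 1/INR (S n) < 1.
Proof.
  assert (H : 1 <= INR (S n)) by (rewrite S_INR; pose proof (pos_INR n); lra).
  assert (H1 : 0 < / INR (S n)) by (apply Rinv_0_lt_compat; lra).
  assert (H2 : / INR (S n) <= 1) by (rewrite <- Rinv_1; apply Rinv_le_contravar; lra).
  unfold Rdiv. rewrite Rmult_1_l. lra.
Qed.
Lemma T_abs x n : Rabs (T_op x n) <= Rabs (x n).
Proof.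
  unfold T_op. destruct (Nat.eqb n 0); [lra|].
  pose proof (coef_bounds n). rewrite Rabs_mult, (Rabs_pos_eq (1 - _)) by lra.
  pose proof (Rabs_pos (x n)). nra.
Qed.
Lemma T_abs_lt x n : n <> 0%nat -> x n <> 0 -> Rabs (T_op x n) < Rabs (x n).
Proof.
  intros Hn Hx. unfold T_op. destruct (Nat.eqb_spec n 0); [contradiction|].
  pose proof (coef_bounds n). rewrite Rabs_mult, (Rabs_pos_eq (1 - _)) by lra.
  pose proof (Rabs_pos_lt _ Hx). nra.
Qed.
Lemma T_bounded p : 0 < p -> is_bounded_op p T_op.
Proof.
  intros Hp. split; [|split].
  - intros x Hx. exact (proj1 (lp_mono p x (T_op x) Hp Hx (T_abs x))).
  - intros x y a b _ _ n. unfold T_op. destruct (Nat.eqb n 0); ring.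
  - exists 1. intros x Hx. rewrite Rmult_1_l. exact (proj2 (lp_mono p x (T_op x) Hp Hx (T_abs x))).
Qed.
Lemma T_en0 : T_op (en 0) = en 0.
Proof. apply functional_extensionality; intros [|n]; unfold T_op, en; simpl; [reflexivity|ring]. Qed.
Lemma opnorm_T p : 0 < p -> op_norm p T_op = 1.
Proof.
  intros Hp. unfold op_norm; apply sup_eq. split.
  - intros r [x [Hx [Hn ->]]]. rewrite <- Hn. exact (proj2 (lp_mono p x (T_op x) Hp Hx (T_abs x))).
  - intros b Hb. apply Hb. exists (en 0). destruct (en_lp p 0) as [H1 H2].
    rewrite T_en0, H2. auto.
Qed.

Lemma neg_e1_sum p : infinite_sum (fun n => rpow (Rabs (- e1 n)) p) 1.
Proof.
  replace (fun n => rpow (Rabs (- e1 n)) p) with (fun n => rpow (Rabs (en 0 n)) p).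
  - apply en_sum.
  - apply functional_extensionality; intros n. rewrite Rabs_Ropp. reflexivity.
Qed.

Lemma norm_one_sum p x : 0 < p -> in_lp p x -> lp_norm p x = 1 ->
  infinite_sum (fun n => rpow (Rabs (x n)) p) 1.
Proof.
  intros Hp [S HS] Hn. rewrite (lp_norm_eq _ _ _ HS) in Hn.
  assert (HS0 : 0 <= S) by (eapply lim_nonneg; [|exact HS]; intros; apply rpow_nonneg).
  assert (E : S = 1) by (rewrite <- (rpow_inv_id' S p Hp HS0), Hn; apply rpow_one_base).
  rewrite <- E; exact HS.
Qed.

Lemma Mset_char p x : 0 < p -> (M_set p T_op x <-> (x = e1 \/ x = (fun n => - e1 n))).
Proof.
  intros Hp. split.
  - intros [Hx [Hn HT]]. rewrite opnorm_T in HT by exact Hp.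
    assert (HTx : in_lp p (T_op x)) by (apply (T_bounded p Hp); exact Hx).
    pose proof (norm_one_sum p x Hp Hx Hn) as H1.
    pose proof (norm_one_sum p _ Hp HTx HT) as H2.
    pose proof (infinite_sum_minus _ _ _ _ H1 H2) as H3.
    set (D := fun n => rpow (Rabs (x n)) p - rpow (Rabs (T_op x n)) p) in H3.
    assert (HD : forall n, 0 <= D n).
    { intros n. unfold D. pose proof (rpow_le _ _ p (Rabs_pos (T_op x n)) (T_abs x n) Hp). lra. }
    assert (Hz : forall k, k <> 0%nat -> x k = 0).
    { intros k Hk. destruct (Req_dec (x k) 0) as [E|E]; [exact E|exfalso].
      assert (Hlt : 0 < D k).
      { unfold D. pose proof (rpow_lt _ _ p (Rabs_pos (T_op x k)) (T_abs_lt x k Hk E) Hp). lra. }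
      pose proof (term_le_sum D k HD). pose proof (sum_le_lim D _ HD H3 k). lra. }
    assert (H0 : infinite_sum (fun n => rpow (Rabs (x n)) p) (rpow (Rabs (x 0%nat)) p)).
    { apply sum_single with 0%nat; [|reflexivity].
      intros n Hn0. rewrite (Hz n Hn0), Rabs_R0. apply rpow_zero. }
    pose proof (uniqueness_sum _ _ _ H0 H1) as E.
    assert (Ha : Rabs (x 0%nat) = 1).
    { rewrite <- (rpow_inv_id (Rabs (x 0%nat)) p Hp (Rabs_pos _)), E. apply rpow_one_base. }
    assert (Hx0 : x 0%nat = 1 \/ x 0%nat = -1).
    { destruct (Rcase_abs (x 0%nat)) as [Hc|Hc];
        [rewrite Rabs_left in Ha by exact Hc | rewrite Rabs_right in Ha by exact Hc]; lra. }
    destruct Hx0 as [Hx0|Hx0]; [left|right]; apply functional_extensionality;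
      intros [|n]; unfold e1; simpl; try (rewrite Hx0; ring);
      rewrite (Hz (S n)) by lia; ring.
  - intros [-> | ->].
    + destruct (en_lp p 0) as [H1 H2]. split; [exact H1|]. split; [exact H2|].
      change e1 with (en 0). rewrite T_en0, H2, opnorm_T by exact Hp. reflexivity.
    + assert (E : T_op (fun n => - e1 n) = (fun n => - e1 n)).
      { apply functional_extensionality; intros [|n]; unfold T_op, e1; simpl; [reflexivity|ring]. }
      assert (H2 : lp_norm p (fun n => - e1 n) = 1).
      { rewrite (lp_norm_eq _ _ _ (neg_e1_sum p)). apply rpow_one_base. }
      split; [exists 1; apply neg_e1_sum|]. split; [exact H2|].
      rewrite E, H2, opnorm_T by exact Hp. reflexivity.
Qed.

Definition ultra_props (U : (nat -> Prop) -> Prop) : Prop :=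
  (forall N, U (fun n => (N <= n)%nat)) /\
  (forall A B, U A -> U B -> U (fun n => A n /\ B n)) /\
  (forall A B : nat -> Prop, (forall n, A n -> B n) -> U A -> U B) /\
  ~ U (fun _ => False) /\
  (forall A, U A \/ U (fun n => ~ A n)).

Definition ulim_prop (U : (nat -> Prop) -> Prop) (u : nat -> R) (l : R) :=
  forall eps, 0 < eps -> U (fun n => Rabs (u n - l) < eps).

Definition ulim U (u : nat -> R) : R := epsilon (inhabits 0) (ulim_prop U u).
Lemma abs_le_iff x c : Rabs x <= c -> -c <= x <= c.
Proof. unfold Rabs; destruct Rcase_abs; lra. Qed.
Lemma abs_lt_iff x c : Rabs x < c -> -c < x < c.
Proof. unfold Rabs; destruct Rcase_abs; lra. Qed.
Lemma abs_lt_intro x c : -c < x < c -> Rabs x < c.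
Proof. unfold Rabs; destruct Rcase_abs; lra. Qed.


Lemma ulim_unique U u l1 l2 : ultra_props U -> ulim_prop U u l1 -> ulim_prop U u l2 -> l1 = l2.
Proof.
  intros [Hc [HI [HS [H0 HV]]]] H1 H2.
  destruct (Req_dec l1 l2) as [E|E]; [exact E|exfalso].
  set (e := Rabs (l1 - l2) / 2).
  assert (He : 0 < e) by (unfold e; pose proof (Rabs_pos_lt (l1 - l2)); apply Rdiv_lt_0_compat; [apply Rabs_pos_lt; lra|lra]).
  apply H0. eapply HS; [|exact (HI _ _ (H1 e He) (H2 e He))].
  intros n [A B]. apply Rabs_def2 in A. apply Rabs_def2 in B. unfold e in *.
  destruct (Rcase_abs (l1 - l2)) as [Hc'|Hc'];
    [rewrite Rabs_left in A, B by exact Hc' | rewrite Rabs_right in A, B by exact Hc']; lra.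
Qed.

Lemma ulim_eq U u l : ultra_props U -> ulim_prop U u l -> ulim U u = l.
Proof.
  intros UP H. unfold ulim.
  pose proof (epsilon_spec (inhabits 0) (ulim_prop U u) (ex_intro _ l H)) as H2.
  eapply ulim_unique; eauto.
Qed.


Lemma ulim_exists U u C : ultra_props U -> (forall n, Rabs (u n) <= C) -> exists l, ulim_prop U u l.
Proof.
  intros UP Hb. pose proof UP as [Hc [HI [HS [H0 HV]]]].
  set (E := fun l => U (fun n => l <= u n)).
  assert (HE1 : E (- C)).
  { unfold E. eapply HS; [|exact (Hc 0%nat)]. intros n _. pose proof (abs_le_iff _ _ (Hb n)). lra. }
  assert (HE2 : forall l, E l -> l <= C).
  { intros l Hl. destruct (Rle_dec l C) as [h|h]; [exact h|exfalso].
    apply H0. eapply HS; [|exact Hl]. intros n Hn. pose proof (abs_le_iff _ _ (Hb n)). lra. }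
  destruct (completeness E (ex_intro _ C HE2) (ex_intro _ _ HE1)) as [L [HL1 HL2]].
  exists L. intros eps Heps.
  assert (A1 : U (fun n => L - eps < u n)).
  { destruct (classic (exists l, E l /\ L - eps < l)) as [[l [Hl Hl2]]|Hn].
    - eapply HS; [|exact Hl]. intros n Hn. lra.
    - exfalso. assert (Hub : is_upper_bound E (L - eps)).
      { intros l Hl. destruct (Rle_dec l (L - eps)) as [h|h]; [exact h|].
        exfalso; apply Hn; exists l; split; [exact Hl|lra]. }
      pose proof (HL2 _ Hub). lra. }
  assert (A2 : U (fun n => u n < L + eps)).
  { destruct (HV (fun n => u n < L + eps)) as [h|h]; [exact h|exfalso].
    assert (HE : E (L + eps)).
    { unfold E. eapply HS; [|exact h]. intros n Hn. apply Rnot_lt_le; exact Hn. }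
    pose proof (HL1 _ HE). lra. }
  eapply HS; [|exact (HI _ _ A1 A2)]. intros n [B1 B2]. apply abs_lt_intro. lra.
Qed.

Lemma ulim_spec U u C : ultra_props U -> (forall n, Rabs (u n) <= C) -> ulim_prop U u (ulim U u).
Proof.
  intros UP Hb. destruct (ulim_exists U u C UP Hb) as [l Hl].
  rewrite (ulim_eq U u l UP Hl). exact Hl.
Qed.

Lemma ulim_bound U u C : ultra_props U -> (forall n, Rabs (u n) <= C) -> Rabs (ulim U u) <= C.
Proof.
  intros UP Hb. pose proof UP as [Hc [HI [HS [H0 HV]]]].
  pose proof (ulim_spec U u C UP Hb) as H. set (L := ulim U u) in *.
  destruct (Rle_dec (Rabs L) C) as [h|h]; [exact h|exfalso].
  apply H0. eapply HS; [|apply (H (Rabs L - C)); lra]. intros n Hn.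
  pose proof (abs_le_iff _ _ (Hb n)). pose proof (abs_lt_iff _ _ Hn).
  destruct (Rcase_abs L) as [hl|hl]; [rewrite Rabs_left in * by exact hl | rewrite Rabs_right in * by exact hl]; lra.
Qed.

Lemma ulim_lin U u v a b Cu Cv : ultra_props U -> (forall n, Rabs (u n) <= Cu) -> (forall n, Rabs (v n) <= Cv) ->
  ulim U (fun n => a * u n + b * v n) = a * ulim U u + b * ulim U v.
Proof.
  intros UP Hu Hv. pose proof UP as [Hc [HI [HS [H0 HV]]]].
  pose proof (ulim_spec U u Cu UP Hu) as H1. pose proof (ulim_spec U v Cv UP Hv) as H2.
  apply ulim_eq; [exact UP|]. intros eps Heps.
  set (d := eps / (Rabs a + Rabs b + 1)).
  assert (Hpos : 0 < Rabs a + Rabs b + 1) by (pose proof (Rabs_pos a); pose proof (Rabs_pos b); lra).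
  assert (Hd : 0 < d) by (unfold d; apply Rdiv_lt_0_compat; lra).
  assert (Hdeq : d * (Rabs a + Rabs b + 1) = eps) by (unfold d; field; lra).
  eapply HS; [|exact (HI _ _ (H1 d Hd) (H2 d Hd))]. intros n [B1 B2].
  replace (a * u n + b * v n - (a * ulim U u + b * ulim U v)) with
    (a * (u n - ulim U u) + b * (v n - ulim U v)) by ring.
  eapply Rle_lt_trans; [apply Rabs_triang|]. rewrite !Rabs_mult.
  pose proof (Rabs_pos a); pose proof (Rabs_pos b).
  assert (Rabs a * Rabs (u n - ulim U u) <= Rabs a * d) by (apply Rmult_le_compat_l; lra).
  assert (Rabs b * Rabs (v n - ulim U v) <= Rabs b * d) by (apply Rmult_le_compat_l; lra).
  nra.
Qed.

Lemma ulim_conv U u l : ultra_props U ->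
  (forall eps, 0 < eps -> exists N, forall n, (N <= n)%nat -> Rabs (u n - l) < eps) -> ulim U u = l.
Proof.
  intros UP H. pose proof UP as [Hc [HI [HS [H0 HV]]]]. apply ulim_eq; [exact UP|].
  intros eps Heps. destruct (H eps Heps) as [N HN]. eapply HS; [|exact (Hc N)]. exact HN.
Qed.

Lemma norming_of p f : 0 < p ->
  (forall A B a b, is_bounded_op p A -> is_bounded_op p B -> f (op_lin a A b B) = a * f A + b * f B) ->
  (forall A, is_bounded_op p A -> Rabs (f A) <= op_norm p A) -> f T_op = 1 ->
  norming_functional p T_op f.
Proof.
  intros Hp Hlin Hb fT. split; [split; [exact Hlin| exists 1; intros A HA; rewrite Rmult_1_l; auto]|].
  split.
  - unfold dual_norm; apply sup_eq. split.
    + intros r [A [HA [Hn ->]]]. eapply Rle_trans; [apply Hb; exact HA|exact Hn].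
    + intros b Hb2. apply Hb2. exists T_op. split; [apply T_bounded; exact Hp|].
      rewrite opnorm_T by exact Hp. split; [lra|]. rewrite fT, Rabs_R1. reflexivity.
  - rewrite fT, opnorm_T by exact Hp. reflexivity.
Qed.

Definition Pop : Op := fun x n => if Nat.eqb n 0 then x 0%nat else 0.

Lemma P_bounded p : 0 < p -> is_bounded_op p Pop.
Proof.
  intros Hp.
  assert (Habs : forall x n, Rabs (Pop x n) <= Rabs (x n)).
  { intros x [|n]; unfold Pop; simpl; [lra|]. rewrite Rabs_R0; apply Rabs_pos. }
  split; [|split].
  - intros x Hx. exact (proj1 (lp_mono p x (Pop x) Hp Hx (Habs x))).
  - intros x y a b _ _ n. unfold Pop. destruct (Nat.eqb n 0); ring.
  - exists 1. intros x Hx. rewrite Rmult_1_l. exact (proj2 (lp_mono p x (Pop x) Hp Hx (Habs x))).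
Qed.

Definition f1 : Op -> R := fun A => A (en 0) 0%nat.
Definition f2 U : Op -> R := fun A => ulim U (fun n => A (en n) n).

Lemma not_smooth p U : 0 < p -> ultra_props U -> ~ smooth_point p T_op.
Proof.
  intros Hp UP [f [Hf Hg]].
  assert (N1 : norming_functional p T_op f1).
  { apply norming_of; [exact Hp| | |].
    - intros A B a b _ _. reflexivity.
    - intros A HA. unfold f1. apply coord_op_le; auto.
    - unfold f1. rewrite T_en0. reflexivity. }
  assert (N2 : norming_functional p T_op (f2 U)).
  { apply norming_of; [exact Hp| | |].
    - intros A B a b HA HB. unfold f2, op_lin.
      apply (ulim_lin U _ _ a b (op_norm p A) (op_norm p B) UP);
        intros n; apply coord_op_le; auto.
    - intros A HA. unfold f2. apply ulim_bound; [exact UP|]. intros n; apply coord_op_le; auto.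
    - unfold f2. apply ulim_conv; [exact UP|]. intros eps Heps.
      destruct (nat_big (/ eps)) as [N HN]. exists (S N). intros n Hn.
      unfold T_op, en. rewrite Nat.eqb_refl. destruct n as [|n]; [lia|]. rewrite (proj2 (Nat.eqb_neq (S n) 0)) by lia.
      assert (H1 : INR N < INR (S (S n))) by (apply lt_INR; lia).
      assert (H0 : 0 < / eps) by (apply Rinv_0_lt_compat; exact Heps).
      replace ((1 - 1 / INR (S (S n))) * 1 - 1) with (- (/ INR (S (S n)))) by (field; lra).
      rewrite Rabs_Ropp, Rabs_pos_eq by (left; apply Rinv_0_lt_compat; lra).
      rewrite <- (Rinv_inv eps). apply Rinv_lt_contravar; [apply Rmult_lt_0_compat; lra|lra]. }
  assert (E1 : f1 Pop = f Pop) by (apply Hg; [exact N1| apply P_bounded; exact Hp]).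
  assert (E2 : f2 U Pop = f Pop) by (apply Hg; [exact N2| apply P_bounded; exact Hp]).
  assert (V1 : f1 Pop = 1) by reflexivity.
  assert (V2 : f2 U Pop = 0).
  { unfold f2. apply ulim_conv; [exact UP|]. intros eps Heps. exists 1%nat. intros n Hn.
    destruct n as [|n]; [lia|]. unfold Pop. simpl. rewrite Rminus_0_r, Rabs_R0. exact Heps. }
  lra.
Qed.

Theorem mainTheorem8_aux (p : R) (hp : 1 < p) (U : (nat -> Prop) -> Prop) (UP : ultra_props U) :
  is_bounded_op p T_op /\
  op_norm p T_op = 1 /\
  (forall x : Seq, M_set p T_op x <-> (x = e1 \/ x = (fun n => - e1 n))) /\
  ~ smooth_point p T_op.
Proof.
  assert (Hp : 0 < p) by lra.
  split; [apply T_bounded; exact Hp|]. split; [apply opnorm_T; exact Hp|].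
  split; [intros x; apply Mset_char; exact Hp|]. exact (not_smooth p U Hp UP).
Qed.

Module UF.
From mathcomp Require Import all_boot classical_sets boolp filter.

Lemma ultra_exists : exists U, ultra_props U.
Proof.
have [G [GU sFG]] := ultraFilterLemma eventually_filter.
exists G; split; [|split; [|split; [|split]]].
- move=> N; apply: sFG; exists N => // n /= H; apply/leP; exact: H.
- move=> A B HA HB; exact: (@filterI _ G _ A B HA HB).
- move=> A B AB; apply: filterS => n; exact: AB.
- exact: (@filter_not_empty _ G _).
- move=> A; exact: in_ultra_setVsetC.
Qed.
End UF.

Theorem mainTheorem8 (p : R) (hp : 1 < p) :
  is_bounded_op p T_op /\
  op_norm p T_op = 1 /\
  (forall x : Seq, M_set p T_op x <-> (x = e1 \/ x = (fun n => - e1 n))) /\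
  ~ smooth_point p T_op.
Proof.
  destruct UF.ultra_exists as [U UP].
  exact (mainTheorem8_aux p hp U UP).
Qed.
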